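(* Let $G$, $w$, $\nu$ be as in the context, and let $\mathcal{S}=(S_m)_{m=0,\ldots,n}$ be a partition of $V(G)$ with $K_m(\mathcal{S})>0$ for all $m=0,\ldots,n-1$. Then for all $1\le p<\infty$ and all $f\in\ell^p_\nu(G)$ with $f|_{S_0}=0$, \[ \|f|_{V(G)\setminus S_0}\|_{p,\nu}\le\delta_{\mathcal{S},p}\|\nabla_w f\|_p, \] and for all bounded $f$ with $f|_{S_0}=0$, \[ \|f|_{V(G)\setminus S_0}\|_\infty\le n\,\|\nabla_w f\|_\infty. \]
   Context: $G$ is an undirected weighted graph: $V(G)$ is a (countable) vertex set and $w:V(G)\times V(G)\to[0,\infty)$ is symmetric with $w(u,u)=0$; edges are pairs with $w(u,v)\neq0$. $\nu:V(G)\to(0,\infty)$ is a fixed vertex weight; $\ell^p_\nu(G)$, $\|f\|_{p,\nu}=\left(\sum_v|f(v)|^p\nu(v)\right)^{1/p}$, $\|f|_A\|_{p,\nu}$ the same sum over $v\in A$; $\|f|_A\|_\infty=\sup_{v\in A}|f(v)|$. $\|\nabla_w f\|_p=\left(\sum_{u,v\in V(G)}|f(u)-f(v)|^pw(u,v)\right)^{1/p}$ for $p<\infty$, and $\|\nabla_w f\|_\infty=\sup\{|f(u)-f(v)|: w(u,v)>0\}$. $w_A(v)=\sum_{u\in A}w(u,v)$. $D_m=\sup_{v\in S_m}\frac{w_{S_{m+1}}(v)}{\nu(v)}$, $K_m=\inf_{v\in S_{m+1}}\frac{w_{S_m}(v)}{\nu(v)}$, and $\delta_{\mathcal{S},p}=\max_{k=1,\ldots,n}\left(\frac{1}{K_{k-1}}\sum_{m=k}^n\prod_{i=k}^{m-1}\frac{D_i}{K_i}\right)$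 for $p=1$, $\delta_{\mathcal{S},p}=\left(\sum_{m=1}^n\left(\sum_{k=1}^mK_{k-1}^{-q/p}\left(\prod_{i=k}^{m-1}\frac{D_i}{K_i}\right)^{q/p}\right)^{p/q}\right)^{1/p}$ for $1<p<\infty$, $1/p+1/q=1$. Empty products equal $1$, empty sums equal $0$. *)

(* Defs.v *)
From mathcomp Require Import all_boot all_order all_algebra.
From mathcomp Require Import all_classical all_reals all_analysis.
Set Implicit Arguments. Unset Strict Implicit. Unset Printing Implicit Defensive.
Import Order.TTheory GRing.Theory Num.Theory.
Local Open Scope classical_set_scope.
Local Open Scope ring_scope.
Local Open Scope ereal_scope.

Section Defs.
Context {R : realType} {V : countType}.
Implicit Types (w : V -> V -> R) (nu : V -> R) (f : V -> R) (A : set V).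

Definition lp_norm_on (p : R) nu f A : \bar R :=
  poweR (\esum_(v in A) (powR `|f v| p * nu v)%:E) p^-1.

Definition linf_norm_on f A : \bar R :=
  ereal_sup [set (`|f v|)%:E | v in A].

Definition grad_norm (p : R) w f : \bar R :=
  poweR (\esum_(uv in [set: V * V]) (powR `|f uv.1 - f uv.2| p * w uv.1 uv.2)%:E) p^-1.

Definition grad_norm_inf w f : \bar R :=
  ereal_sup [set (`|f uv.1 - f uv.2|)%:E | uv in [set uv : V * V | (0 < w uv.1 uv.2)%R]].

Definition wA w A (v : V) : \bar R := \esum_(u in A) (w u v)%:E.

Definition Dm w nu (S : nat -> set V) (m : nat) : \bar R :=
  ereal_sup [set wA w (S m.+1) v * ((nu v)^-1)%:E | v in S m].

Definition Km w nu (S : nat -> set V) (m : nat) : \bar R :=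
  ereal_inf [set wA w (S m) v * ((nu v)^-1)%:E | v in S m.+1].

Definition ratio_prod w nu S (k m : nat) : \bar R :=
  \prod_(k <= i < m) (Dm w nu S i * ((fine (Km w nu S i))^-1)%:E).

Definition delta w nu S (n : nat) (p : R) : \bar R :=
  if p == 1%R then
    \big[maxe/0]_(1 <= k < n.+1)
      (((fine (Km w nu S k.-1))^-1)%:E *
        \sum_(k <= m < n.+1) ratio_prod w nu S k m)
  else
    let q := (p / (p - 1))%R in
    poweR (\sum_(1 <= m < n.+1)
       poweR (\sum_(1 <= k < m.+1)
                ((powR (fine (Km w nu S k.-1)) (- (q / p)))%:E *
                 poweR (ratio_prod w nu S k m) (q / p)))
             (p / q)) p^-1.

End Defs.

(* Main.v *)
Require Import Defs.
From mathcomp Require Import all_boot all_order all_algebra.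
From mathcomp Require Import all_classical all_reals all_analysis.
From mathcomp Require Import ring lra.
Import Order.TTheory GRing.Theory Num.Theory.
Local Open Scope classical_set_scope.
Local Open Scope ring_scope.
Section real_lemmas.
Context {R : realType}.

Lemma inv_powR (s r : R) : 0 < s -> (s^-1) `^ r = s `^ (- r).
Proof.
move=> s0; rewrite -powR_inv1 ?ltW// -powRrM; congr (_ `^ _); ring.
Qed.

Lemma pw_ineq (p l a b : R) : 1 <= p -> 0 < l -> l < 1 -> 0 <= a -> 0 <= b ->
  (a + b) `^ p <= l `^ (1 - p) * a `^ p + (1 - l) `^ (1 - p) * b `^ p.
Proof.
move=> p1 l0 l1 a0 b0.
have l'0 : 0 < 1 - l by rewrite subr_gt0.
have -> : a + b = l * (a / l) + (1 - l) * (b / (1 - l)).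
  by rewrite !mulrA ![_ * _ / _]mulrC !mulrA !mulVf ?gt_eqF// !mul1r.
have H := (convex_powR p1 (Itv01 (ltW l0) (ltW l1))).
have m1 : a / l \in (`[0, +oo[%classic : set R).
  by rewrite inE /= in_itv /= andbT divr_ge0 // ltW.
have m2 : b / (1 - l) \in (`[0, +oo[%classic : set R).
  by rewrite inE /= in_itv /= andbT divr_ge0 // ltW.
have H2 := H _ _ m1 m2; rewrite !convRE /= in H2.
apply: le_trans H2 _.
have key (c x : R) : 0 < c -> 0 <= x -> c * (x / c) `^ p = c `^ (1 - p) * x `^ p.
  move=> c0 x0; rewrite (powRM _ x0 (ltW (_ : 0 < c^-1))); last by rewrite invr_gt0.
  rewrite inv_powR// mulrCA mulrC; congr (_ * _).
  rewrite -{1}(powRr1 (ltW c0)) -powRD; last by rewrite (gt_eqF c0) implybT.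
  by congr (_ `^ _); ring.
rewrite !key//; exact: ltW.
Qed.

Lemma powRK (p x : R) : 0 < p -> 0 <= x -> (x `^ p) `^ p^-1 = x.
Proof. by move=> p0 x0; rewrite -powRrM mulfV ?gt_eqF// powRr1. Qed.

Lemma powRKV (p x : R) : 0 < p -> 0 <= x -> (x `^ p^-1) `^ p = x.
Proof. by move=> p0 x0; rewrite -powRrM mulVf ?gt_eqF// powRr1. Qed.

Lemma deduce (p X Y Z : R) : 1 <= p -> 0 <= X -> 0 <= Y -> 0 <= Z ->
  (forall l, 0 < l -> l < 1 -> Z <= l `^ (1 - p) * X + (1 - l) `^ (1 - p) * Y) ->
  Z `^ p^-1 <= X `^ p^-1 + Y `^ p^-1.
Proof.
move=> p1 X0 Y0 Z0 H.
have p0 : 0 < p by apply: lt_le_trans p1.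
have [x xdef] : {x | x = X `^ p^-1} by exists (X `^ p^-1).
have [y ydef] : {y | y = Y `^ p^-1} by exists (Y `^ p^-1).
rewrite -xdef -ydef.
have x0 : 0 <= x by rewrite xdef; exact: powR_ge0.
have y0 : 0 <= y by rewrite ydef; exact: powR_ge0.
have Xx : X = x `^ p by rewrite xdef powRKV.
have Yy : Y = y `^ p by rewrite ydef powRKV.
apply/ler_addgt0Pr => e0' e0.
have [e edef] : {e : R | e = e0'} by exists e0'.
rewrite -edef; rewrite -edef in e0.
have [e' e'def] : {e' : R | e' = e / 2} by exists (e / 2).
have e'0 : 0 < e' by rewrite e'def divr_gt0.
have [s sdef] : {s : R | s = x + y + e} by exists (x + y + e).
rewrite -sdef.
have hs : s = (x + e') + (y + e') by rewrite sdef e'def; field.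
have xe0 : 0 < x + e' by apply: ltr_wpDl.
have ye0 : 0 < y + e' by apply: ltr_wpDl.
have s0 : 0 < s by rewrite hs; apply: addr_gt0.
have [l ldef] : {l : R | l = (x + e') / s} by exists ((x + e') / s).
have l0 : 0 < l by rewrite ldef divr_gt0.
have l1 : l < 1 by rewrite ldef ltr_pdivrMr// mul1r hs ltrDl.
have h1l : 1 - l = (y + e') / s.
  by rewrite ldef; apply: (@mulIf _ s); rewrite ?gt_eqF// mulrBl !mulfVK ?gt_eqF// mul1r hs; ring.
have key (c : R) : 0 < c -> (c / s) `^ (1 - p) * c `^ p = c * s `^ (p - 1).
  move=> c0; rewrite (powRM _ (ltW c0) (ltW (_ : 0 < s^-1))); last by rewrite invr_gt0.
  rewrite inv_powR// mulrAC -powRD; last by rewrite (gt_eqF c0) implybT.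
  by rewrite subrK powRr1 ?ltW// opprB.
have Zs : Z <= s `^ p.
  apply: le_trans (H l l0 l1) _; rewrite Xx Yy.
  apply: (@le_trans _ _ (l `^ (1 - p) * (x + e') `^ p +
            (1 - l) `^ (1 - p) * (y + e') `^ p)).
    apply: lerD; apply: ler_wpM2l; rewrite ?powR_ge0//;
    apply: ge0_ler_powR; rewrite ?nnegrE ?lerDl ?(ltW e'0) ?(ltW xe0) ?(ltW ye0) ?(ltW p0)//.
  rewrite h1l ldef (key _ xe0) (key _ ye0) -mulrDl -hs (mulr_powRB1 (ltW s0) p0).
  exact: lexx.
rewrite -[s](@powRK p s p0 (ltW s0)).
apply: ge0_ler_powR; rewrite ?nnegrE ?powR_ge0// invr_ge0 ltW//.
Qed.

Lemma hoelder_seq (I : Type) (p q : R) (r : seq I) (a b : I -> R) :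
  0 < p -> 0 < q -> p^-1 + q^-1 = 1 -> (forall i, 0 <= a i) -> (forall i, 0 <= b i) ->
  \sum_(i <- r) a i * b i <=
  (\sum_(i <- r) a i `^ p) `^ p^-1 * (\sum_(i <- r) b i `^ q) `^ q^-1.
Proof.
move=> p0 q0 pq a0 b0; elim: r => [|i r IH].
  by rewrite !big_nil powR0 ?mul0r // invr_neq0 // gt_eqF.
rewrite !big_cons.
have A0 : 0 <= \sum_(j <- r) a j `^ p by apply: sumr_ge0 => j _; exact: powR_ge0.
have B0 : 0 <= \sum_(j <- r) b j `^ q by apply: sumr_ge0 => j _; exact: powR_ge0.
move: IH A0 B0.
move: (\sum_(j <- r) a j `^ p) (\sum_(j <- r) b j `^ q) (\sum_(j <- r) a j * b j).
move=> A B S IH A0 B0.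
apply: le_trans (lerD (lexx (a i * b i)) IH) _.
have := @hoelder2 R (a i) (A `^ p^-1) (b i) (B `^ q^-1) p q (a0 i) (powR_ge0 _ _)
  (b0 i) (powR_ge0 _ _) p0 q0 pq.
by rewrite (@powRKV p A p0 A0) (@powRKV q B q0 B0).
Qed.

End real_lemmas.

Section ereal_lemmas.
Context {R : realType}.
Local Open Scope ereal_scope.

Lemma sume_ge_term (I : eqType) (r : seq I) (F : I -> \bar R) j :
  j \in r -> (forall i, 0 <= F i) -> F j <= \sum_(i <- r) F i.
Proof.
move=> + F0; elim: r => // i r IH; rewrite inE big_cons => /orP[/eqP->|/IH h].
  by apply: leeDl; apply: sume_ge0.
by apply: le_trans h _; apply: leeDr.
Qed.

Lemma bigmaxe_ge (I : eqType) (r : seq I) (F : I -> \bar R) x j :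
  j \in r -> F j <= \big[maxe/x]_(i <- r) F i.
Proof.
elim: r => // i r IH; rewrite inE big_cons => /orP[/eqP->|/IH h].
  by rewrite le_max lexx.
by rewrite le_max h orbT.
Qed.

Lemma bigmaxe_ge0 (I : eqType) (r : seq I) (F : I -> \bar R) :
  0 <= \big[maxe/0]_(i <- r) F i.
Proof.
elim: r => [|i r IH]; first by rewrite big_nil.
by rewrite big_cons le_max IH orbT.
Qed.

Lemma ehoelder (I : eqType) (p : R) (r : seq I) (c g : I -> \bar R) :
  (1 < p)%R -> (forall i, 0 <= c i) -> (forall i, 0 <= g i) ->
  (\sum_(i <- r) c i * g i) `^ p <=
  (\sum_(i <- r) c i `^ (p / (p - 1))) `^ (p / (p / (p - 1))) *
  \sum_(i <- r) g i `^ p.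
Proof.
move=> p1 c0 g0.
have p0 : (0 < p)%R by apply: lt_trans p1.
have p10 : (0 < p - 1)%R by rewrite subr_gt0.
set q := (p / (p - 1))%R.
have q0 : (0 < q)%R by rewrite divr_gt0.
have pq : (q^-1 + p^-1 = 1)%R by rewrite /q invf_div; field; rewrite gt_eqF.
have pq0 : (p / q != 0)%R by rewrite mulf_neq0 ?invr_neq0 ?gt_eqF.
case: (boolP (all (fun i => c i \is a fin_num) r)) => [/allP cf|/allPn [j jr cj]];
  last first.
  have cjy : c j = +oo.
    by case/fin_numPn: cj => // cjN; have := c0 j; rewrite cjN.
  have Cy : \sum_(i <- r) c i `^ q = +oo.
    apply/eqP; rewrite eq_le leey /=.
    have := @sume_ge_term _ r (fun i => c i `^ q) _ jr (fun i => poweR_ge0 _ _).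
    by rewrite cjy poweRyr ?gt_eqF.
  rewrite Cy poweRyr//.
  have G0 : 0 <= \sum_(i <- r) g i `^ p by apply: sume_ge0 => i _; exact: poweR_ge0.
  case: (eqVneq (\sum_(i <- r) g i `^ p) 0) => G00; last first.
    by rewrite gt0_mulye ?leey// lt_neqAle eq_sym G00 G0.
  rewrite G00 mule0.
  have gi0 i : i \in r -> g i = 0.
    move=> ir; apply: (poweR_eq0_eq0 (r := p)) => //.
    apply/eqP; rewrite eq_le poweR_ge0 andbT -G00.
    exact: (@sume_ge_term _ r (fun i => g i `^ p) _ ir (fun i => poweR_ge0 _ _)).
  rewrite big_seq (eq_bigr (fun=> 0)); last by move=> i /gi0 ->; rewrite mule0.
  by rewrite -big_seq big1// poweR0r// gt_eqF.
case: (boolP (all (fun i => g i \is a fin_num) r)) => [/allP gf|/allPn [j jr gj]];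
  last first.
  have gjy : g j = +oo.
    by case/fin_numPn: gj => // gjN; have := g0 j; rewrite gjN.
  have Gy : \sum_(i <- r) g i `^ p = +oo.
    apply/eqP; rewrite eq_le leey /=.
    have := @sume_ge_term _ r (fun i => g i `^ p) _ jr (fun i => poweR_ge0 _ _).
    by rewrite gjy poweRyr ?gt_eqF.
  rewrite Gy.
  have C0 : 0 <= \sum_(i <- r) c i `^ q by apply: sume_ge0 => i _; exact: poweR_ge0.
  case: (eqVneq (\sum_(i <- r) c i `^ q) 0) => C00; last first.
    rewrite gt0_muley ?leey// poweR_gt0// lt_neqAle eq_sym C00 C0//.
  rewrite C00 poweR0r// mul0e.
  have ci0 i : i \in r -> c i = 0.
    move=> ir; apply: (poweR_eq0_eq0 (r := q)) => //.
    apply/eqP; rewrite eq_le poweR_ge0 andbT -C00.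
    exact: (@sume_ge_term _ r (fun i => c i `^ q) _ ir (fun i => poweR_ge0 _ _)).
  rewrite big_seq (eq_bigr (fun=> 0)); last by move=> i /ci0 ->; rewrite mul0e.
  by rewrite -big_seq big1// poweR0r// gt_eqF.
have e1 : \sum_(i <- r) c i * g i = (\sum_(i <- r) fine (c i) * fine (g i))%:E.
  rewrite -sumEFin big_seq [RHS]big_seq; apply: eq_bigr => i ir.
  by rewrite EFinM !fineK ?cf ?gf.
have e2 : \sum_(i <- r) c i `^ q = (\sum_(i <- r) fine (c i) `^ q)%:E.
  rewrite -sumEFin big_seq [RHS]big_seq; apply: eq_bigr => i ir.
  by rewrite -poweR_EFin !fineK ?cf.
have e3 : \sum_(i <- r) g i `^ p = (\sum_(i <- r) fine (g i) `^ p)%:E.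
  rewrite -sumEFin big_seq [RHS]big_seq; apply: eq_bigr => i ir.
  by rewrite -poweR_EFin !fineK ?gf.
rewrite e1 e2 e3 !poweR_EFin -EFinM lee_fin.
have fc0 i : (0 <= fine (c i))%R by apply: fine_ge0.
have fg0 i : (0 <= fine (g i))%R by apply: fine_ge0.
have H := @hoelder_seq _ _ q p r _ _ q0 p0 pq fc0 fg0.
have C0 : (0 <= \sum_(i <- r) fine (c i) `^ q)%R by apply: sumr_ge0 => i _; exact: powR_ge0.
have G0 : (0 <= \sum_(i <- r) fine (g i) `^ p)%R by apply: sumr_ge0 => i _; exact: powR_ge0.
have S0 : (0 <= \sum_(i <- r) fine (c i) * fine (g i))%R.
  by apply: sumr_ge0 => i _; apply: mulr_ge0.
move: H C0 G0 S0.
move: (\sum_(i <- r) fine (c i) `^ q)%R (\sum_(i <- r) fine (g i) `^ p)%R.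
move: (\sum_(i <- r) fine (c i) * fine (g i))%R => S C G H C0 G0 S0.
apply: (@le_trans _ _ ((C `^ q^-1 * G `^ p^-1) `^ p)%R).
  apply: ge0_ler_powR; rewrite ?nnegrE ?(ltW p0)//.
  by apply: mulr_ge0; apply: powR_ge0.
rewrite (powRM _ (powR_ge0 _ _) (powR_ge0 _ _)) (@powRKV _ p G p0 G0) -powRrM.
have -> : (q^-1 * p = p / q)%R by rewrite mulrC.
by rewrite mulrC.
Qed.

End ereal_lemmas.

Section esum_lemmas.
Context {R : realType} {T : choiceType}.
Local Open Scope ereal_scope.
Implicit Types (a : T -> \bar R) (I J : set T).

Lemma esum_ge1 I a j : (forall i, I i -> 0 <= a i) -> I j ->
  a j <= \esum_(i in I) a i.
Proof.
move=> a0 Ij; apply: esum_ge; exists [set j]; last by rewrite fsbig_set1.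
by split; [exact: finite_set1|move=> x ->].
Qed.

Lemma esumZl_le (c : R) I a : (0 <= c)%R -> (forall i, I i -> 0 <= a i) ->
  \esum_(i in I) (c%:E * a i) <= c%:E * \esum_(i in I) a i.
Proof.
move=> c0 a0; apply: ge_ereal_sup => _ [X [finX XI] <-].
rewrite fsbig_finite//= big_seq -ge0_sume_distrr; last first.
  by move=> i; rewrite in_fset_set// inE => /XI /a0.
rewrite -big_seq -fsbig_finite//; apply: lee_wpmul2l; first by rewrite lee_fin.
by apply: ereal_sup_ubound; exists X.
Qed.

Lemma esumZl (c : R) I a : (0 <= c)%R -> (forall i, I i -> 0 <= a i) ->
  \esum_(i in I) (c%:E * a i) = c%:E * \esum_(i in I) a i.
Proof.
move=> c0 a0; apply/eqP; rewrite eq_le esumZl_le//=.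
have [->|cn0] := eqVneq c 0%R.
  by rewrite mul0e; apply: esum_ge0 => i _; rewrite mul0e.
have cp : (0 < c)%R by rewrite lt_neqAle eq_sym cn0.
have := @esumZl_le c^-1 I (fun i => c%:E * a i) _ _.
rewrite invr_ge0 ltW// => /(_ isT) H.
have c0E : 0 <= c%:E by rewrite lee_fin.
have {}H := H (fun i Ii => mule_ge0 c0E (a0 i Ii)).
have E : \esum_(i in I) (c^-1)%:E * (c%:E * a i) = \esum_(i in I) a i.
  by apply: eq_esum => i _; rewrite muleA -EFinM mulVf// mul1e.
rewrite E in H.
have := lee_wpmul2l c0E H.
by rewrite muleA -EFinM mulfV// mul1e.
Qed.

Lemma esum_subset I J a : I `<=` J -> (forall i, J i -> 0 <= a i) ->
  \esum_(i in I) a i <= \esum_(i in J) a i.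
Proof.
move=> IJ a0; rewrite esum_mkcond [leRHS]esum_mkcond; apply: le_esum => i _.
case: ifPn => iI; first by rewrite ifT// inE; apply: IJ; rewrite -inE.
by case: ifPn => // /[!inE] /a0.
Qed.

End esum_lemmas.

Lemma esum_swap (R : realType) (T1 T2 : choiceType) (I : set T1) (J : set T2)
  (a : T1 * T2 -> \bar R) :
  \esum_(z in I `*` J) a z = \esum_(z in J `*` I) a (z.2, z.1).
Proof.
apply: (reindex_esum (J `*` I) (I `*` J) (fun z => (z.2, z.1))).
split.
- by move=> [x y] [/= Jx Iy].
- by move=> [x y] [x' y'] _ _ /= [-> ->].
- by move=> [x y] [/= Ix Jy]; exists (y, x).
Qed.

Lemma perm4 (R : realType) (a b d r : \bar R) : (b * (r * (d * a)) = a * d * (b * r))%E.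
Proof. by rewrite [RHS]muleC -muleA [(d * a)%E]muleC. Qed.

Lemma esum_disj_le (R : realType) (T : choiceType) (I : eqType) (r : seq I)
    (X : I -> set T) (Y : set T) (a : T -> \bar R) :
  uniq r -> (forall i, i \in r -> X i `<=` Y) ->
  (forall i j z, i \in r -> j \in r -> X i z -> X j z -> i = j) ->
  (forall z, Y z -> (0 <= a z)%E) ->
  (\sum_(i <- r) \esum_(z in X i) a z <= \esum_(z in Y) a z)%E.
Proof.
elim: r Y => [|i r IH] Y /= u XY dis a0; first by rewrite big_nil esum_ge0.
move/andP: u => [ir ur].
rewrite big_cons (esumID (X i) Y)//.
rewrite (_ : Y `&` X i = X i); last by apply/setIidr; apply: XY; rewrite mem_head.
apply: leeD2l; apply: IH => //.
- move=> j jr z Xjz; split; first by apply: (XY j _ z Xjz); rewrite inE jr orbT.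
  move=> Xiz; have jr' : j \in i :: r by rewrite inE jr orbT.
  have ij := dis i j z (mem_head _ _) jr' Xiz Xjz.
  by move: ir; rewrite ij jr.
- move=> j k z jr kr; apply: dis; rewrite inE ?jr ?kr orbT//.
- by move=> z [Yz _]; apply: a0.
Qed.

Lemma tri_exchange (R : realType) (F : nat -> nat -> \bar R) N :
  (\sum_(1 <= m < N.+1) \sum_(1 <= k < m.+1) F k m =
   \sum_(1 <= k < N.+1) \sum_(k <= m < N.+1) F k m)%E.
Proof.
elim: N => [|N IH]; first by rewrite !big_geq.
rewrite big_nat_recr// IH [in RHS]big_nat_recr//=.
rewrite [X in (_ = X + _)%E](eq_big_nat _ _ (F2 := fun k =>
   (\sum_(k <= m < N.+1) F k m + F k N.+1)%E)); last first.
  by move=> k /andP[_ kN]; rewrite big_nat_recr// ltnW.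
rewrite big_split/= big_nat1 -addeA; congr (_ + _)%E.
by rewrite big_nat_recr.
Qed.

Section Main.
Local Open Scope ereal_scope.
Variables (R : realType) (V : countType) (w : V -> V -> R) (nu : V -> R)
  (S : nat -> set V) (n : nat).
Hypothesis hw0 : forall u v, (0 <= w u v)%R.
Hypothesis hsym : forall u v, w u v = w v u.
Hypothesis hnu : forall v, (0 < nu v)%R.
Hypothesis hpart : forall v, exists! m, (m <= n)%N /\ S m v.
Hypothesis hK : forall m, (m < n)%N -> 0 < Km w nu S m < +oo.

Definition Kr m := fine (Km w nu S m).

Lemma part_uniq m1 m2 v : (m1 <= n)%N -> (m2 <= n)%N -> S m1 v -> S m2 v -> m1 = m2.
Proof.
move=> h1 h2 s1 s2; have [m [_ hm]] := hpart v.
by rewrite -(hm m1 (conj h1 s1)) (hm m2 (conj h2 s2)).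
Qed.

Lemma part_ex v : exists m, (m <= n)%N /\ S m v.
Proof. by have [m [hm _]] := hpart v; exists m. Qed.

Lemma Kr_gt0 m : (m < n)%N -> (0 < Kr m)%R.
Proof.
move=> mn; have /andP[K0 Ky] := hK _ mn.
by rewrite /Kr; apply: fine_gt0; rewrite K0 Ky.
Qed.

Lemma KrE m : (m < n)%N -> (Kr m)%:E = Km w nu S m.
Proof.
move=> mn; have /andP[K0 Ky] := hK _ mn.
by rewrite /Kr fineK// fin_numE gt_eqF ?(lt_trans _ K0)// ?ltNye// lt_eqF.
Qed.

Lemma wA_ge0 A v : 0 <= wA w A v.
Proof. by apply: esum_ge0 => u _; rewrite lee_fin. Qed.

Lemma K_le m v : (m < n)%N -> S m.+1 v -> (Kr m * nu v)%:E <= wA w (S m) v.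
Proof.
move=> mn Sv.
have H : Km w nu S m <= wA w (S m) v * ((nu v)^-1)%:E.
  by apply: ereal_inf_lbound; exists v.
by rewrite -(KrE m mn) lee_pdivlMr// in H.
Qed.

Lemma edge m v : (m < n)%N -> S m.+1 v -> exists u, S m u /\ (0 < w u v)%R.
Proof.
move=> mn Sv; have H := K_le _ _ mn Sv.
apply/not_existsP => Hn.
have : wA w (S m) v = 0.
  apply: esum1 => u Su; congr (_%:E).
  apply/eqP; rewrite eq_le hw0 andbT leNgt; apply/negP => wp.
  by apply: (Hn u); split.
move=> h; rewrite h lee_fin in H.
have : (0 < Kr m * nu v)%R by rewrite mulr_gt0 ?(Kr_gt0 _ mn).
by rewrite ltNge H.
Qed.

Lemma Snonempty m : (m < n)%N -> exists v, S m.+1 v.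
Proof.
move=> mn; have /andP[_ Ky] := hK _ mn.
apply/not_existsP => Hn; move: Ky; rewrite /Km.
suff -> : [set wA w (S m) v * ((nu v)^-1)%:E | v in S m.+1] = set0.
  by rewrite ereal_inf0.
by apply/seteqP; split => // x [v Sv _]; exfalso; exact: (Hn v).
Qed.

Lemma D_ge0 m : (m < n)%N -> 0 <= Dm w nu S m.
Proof.
move=> mn; have [v Sv] := Snonempty _ mn; have [u [Su wp]] := edge _ _ mn Sv.
apply: (@le_trans _ _ (wA w (S m.+1) u * ((nu u)^-1)%:E)).
  by apply: mule_ge0; [exact: wA_ge0|rewrite lee_fin invr_ge0 ltW].
by apply: ereal_sup_ubound; exists u.
Qed.

Lemma D_le m u : S m u -> wA w (S m.+1) u <= Dm w nu S m * (nu u)%:E.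
Proof.
move=> Su; have H : wA w (S m.+1) u * ((nu u)^-1)%:E <= Dm w nu S m.
  by apply: ereal_sup_ubound; exists u.
by rewrite lee_pdivrMr in H.
Qed.

Lemma inf_part (f : V -> R) : (forall v, S 0%N v -> f v = 0%R) ->
  linf_norm_on f (~` S 0%N) <= (n%:R)%:E * grad_norm_inf w f.
Proof.
move=> f0; set M := grad_norm_inf w f.
have Medge u v : (0 < w u v)%R -> (`|f u - f v|)%:E <= M.
  by move=> wp; apply: ereal_sup_ubound; exists (u, v).
have claim m : (m <= n)%N -> forall v, S m v -> (`|f v|)%:E <= (m%:R)%:E * M.
  elim: m => [_ v /f0 ->|m IH mn v Sv]; first by rewrite normr0 mul0e.
  have [u [Su wp]] := edge _ _ mn Sv.
  have M0 : 0 <= M by apply: le_trans (Medge _ _ wp); rewrite lee_fin.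
  rewrite -addn1 natrD EFinD ge0_muleDl ?lee_fin// mul1e.
  apply: (@le_trans _ _ ((`|f u|)%:E + (`|f v - f u|)%:E)).
    by rewrite -EFinD lee_fin -{1}(subrK (f u) (f v)) addrC ler_normD.
  apply: leeD; first exact: IH (ltnW mn) u Su.
  by apply: Medge; rewrite hsym.
apply: ub_ereal_sup => _ [v Sv <-].
have [m [mn Smv]] := part_ex v.
have m0 : (0 < m)%N.
  by rewrite lt0n; apply/eqP => m0; apply: Sv; rewrite -m0.
apply: le_trans (claim m mn v Smv) _.
have Sv' : S m.-1.+1 v by rewrite prednK.
have m1n : (m.-1 < n)%N by rewrite (leq_trans _ mn)// ltn_predL.
have [u [Su wp]] := @edge m.-1 v m1n Sv'.
have M0 : 0 <= M by apply: le_trans (Medge _ _ wp); rewrite lee_fin.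
by apply: lee_wpmul2r => //; rewrite lee_fin ler_nat.
Qed.

Section p_part.
Variables (p : R) (f : V -> R).
Hypothesis hp : (1 <= p)%R.
Hypothesis hfin : \esum_(v in [set: V]) (powR `|f v| p * nu v)%:E < +oo.
Hypothesis hf0 : forall v, S 0%N v -> f v = 0%R.

Definition A m := \esum_(v in S m) (powR `|f v| p * nu v)%:E.
Definition G m := \esum_(z in S m.+1 `*` S m) (powR `|f z.1 - f z.2| p * w z.1 z.2)%:E.
Definition DA m := \esum_(z in S m.+1 `*` S m) (powR `|f z.2| p * w z.1 z.2)%:E.

Lemma p0 : (0 < p)%R. Proof. exact: lt_le_trans hp. Qed.

Lemma A_ge0 m : 0 <= A m.
Proof. by apply: esum_ge0 => v _; rewrite lee_fin mulr_ge0 ?powR_ge0 ?ltW. Qed.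

Lemma A_lty m : A m < +oo.
Proof.
apply: le_lt_trans hfin; apply: esum_subset => // v _.
by rewrite lee_fin mulr_ge0 ?powR_ge0 ?ltW.
Qed.

Lemma G_ge0 m : 0 <= G m.
Proof. by apply: esum_ge0 => z _; rewrite lee_fin mulr_ge0 ?powR_ge0. Qed.

Lemma DA_ge0 m : 0 <= DA m.
Proof. by apply: esum_ge0 => z _; rewrite lee_fin mulr_ge0 ?powR_ge0. Qed.

Lemma lam_step m l : (m < n)%N -> (0 < l)%R -> (l < 1)%R ->
  (Kr m)%:E * A m.+1 <= (l `^ (1 - p))%:E * G m + ((1 - l) `^ (1 - p))%:E * DA m.
Proof.
move=> mn l0 l1.
have Kr0 := Kr_gt0 _ mn.
rewrite /A -esumZl; last 2 first.
- exact: ltW.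
- by move=> v _; rewrite lee_fin mulr_ge0 ?powR_ge0 ?ltW.
apply: (@le_trans _ _ (\esum_(v in S m.+1) (powR `|f v| p)%:E * wA w (S m) v)).
  apply: le_esum => v Sv; rewrite -EFinM.
  rewrite (_ : (Kr m * (`|f v| `^ p * nu v))%R = (`|f v| `^ p * (Kr m * nu v))%R);
    last by rewrite mulrCA.
  rewrite EFinM; apply: lee_wpmul2l; first by rewrite lee_fin powR_ge0.
  exact: K_le.
have E1 : \esum_(v in S m.+1) (powR `|f v| p)%:E * wA w (S m) v =
    \esum_(z in S m.+1 `*` S m) (powR `|f z.1| p * w z.2 z.1)%:E.
  rewrite -(@esum_esum _ _ _ (S m.+1) (fun _ => S m)
    (fun v u => (powR `|f v| p * w u v)%:E)); last first.
    by move=> v u _ _; rewrite lee_fin mulr_ge0 ?powR_ge0.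
  apply: eq_esum => v _; rewrite /wA -esumZl ?powR_ge0//.
  by move=> u _; rewrite lee_fin.
rewrite E1 /G /DA -!esumZl; last 4 first.
- exact: powR_ge0.
- by move=> z _; rewrite lee_fin mulr_ge0 ?powR_ge0.
- exact: powR_ge0.
- by move=> z _; rewrite lee_fin mulr_ge0 ?powR_ge0.
rewrite -esumD; last 2 first.
- by move=> z _; rewrite lee_fin !mulr_ge0 ?powR_ge0.
- by move=> z _; rewrite lee_fin !mulr_ge0 ?powR_ge0.
apply: le_esum => z _; rewrite -!EFinM -EFinD lee_fin hsym.
rewrite !mulrA -mulrDl; apply: ler_wpM2r => //.
have PW := (@pw_ineq _ p l _ _ hp l0 l1 (normr_ge0 (f z.1 - f z.2)%R) (normr_ge0 (f z.2))).
apply: le_trans PW.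
apply: ge0_ler_powR; rewrite ?nnegrE ?(ltW p0) ?addr_ge0//.
by rewrite -{1}(subrK (f z.2) (f z.1)) ler_normD.
Qed.

Lemma DA_le m : (m < n)%N -> DA m <= Dm w nu S m * A m.
Proof.
move=> mn.
have E1 : DA m = \esum_(u in S m) (powR `|f u| p)%:E * wA w (S m.+1) u.
  rewrite /DA esum_swap.
  rewrite -(@esum_esum _ _ _ (S m) (fun _ => S m.+1)
    (fun u v => (powR `|f u| p * w v u)%:E)); last first.
    by move=> v u _ _; rewrite lee_fin mulr_ge0 ?powR_ge0.
  apply: eq_esum => u _; rewrite /wA -esumZl ?powR_ge0//.
  by move=> v _; rewrite lee_fin.
rewrite E1; move: (D_le m) (D_ge0 _ mn).
case: (Dm w nu S m) => [d| |] // Dle d0.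
- rewrite /A -esumZl; last 2 first.
  + by rewrite -lee_fin.
  + by move=> v _; rewrite lee_fin mulr_ge0 ?powR_ge0 ?ltW.
  apply: le_esum => u Su; rewrite -EFinM (mulrCA d) EFinM.
  apply: lee_wpmul2l; first by rewrite lee_fin powR_ge0.
  by rewrite EFinM; exact: Dle.
- have A0 := A_ge0 m.
  case: (eqVneq (A m) 0) => A00; last first.
    by rewrite gt0_mulye ?leey// lt_neqAle eq_sym A00 A0.
  rewrite A00 mule0 le_eqVlt; apply/orP; left; apply/eqP.
  apply: esum1 => u Su.
  have : (powR `|f u| p * nu u)%:E <= A m.
    by apply: esum_ge1 => // v _; rewrite lee_fin mulr_ge0 ?powR_ge0 ?ltW.
  rewrite A00 lee_fin -(mul0r (nu u)) ler_pM2r// => h.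
  have -> : (`|f u| `^ p = 0)%R by apply/eqP; rewrite eq_le h powR_ge0.
  by rewrite mul0e.
Qed.
Lemma R1 m : (m < n)%N ->
  (powR (Kr m) p^-1)%:E * A m.+1 `^ p^-1 <=
  G m `^ p^-1 + Dm w nu S m `^ p^-1 * A m `^ p^-1.
Proof.
move=> mn.
have pi0 : (p^-1 != 0)%R by rewrite invr_neq0// gt_eqF// p0.
have pi0' : (0 <= p^-1)%R by rewrite invr_ge0 ltW// p0.
have Kr0 := Kr_gt0 _ mn.
have D0 := D_ge0 _ mn.
have RHS0 : 0 <= Dm w nu S m `^ p^-1 * A m `^ p^-1 by apply: mule_ge0; exact: poweR_ge0.
have G0 := G_ge0 m.
case: (eqVneq (G m) +oo) => Gy.
  by rewrite Gy poweRyr// addye ?leey// gt_eqF// (lt_le_trans _ RHS0) ?ltNy0.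
have DAle := DA_le m mn.
case: (eqVneq (DA m) +oo) => DAy.
  have DAy' : Dm w nu S m * A m = +oo by apply/eqP; rewrite -leye_eq -DAy.
  rewrite -poweRM ?A_ge0// DAy' poweRyr// addey ?leey// gt_eqF//.
  by rewrite (lt_le_trans _ (poweR_ge0 _ _)) ?ltNy0.
have DA0 := DA_ge0 m.
have Gf : G m = (fine (G m))%:E by rewrite fineK// ge0_fin_numE// ltey.
have DAf : DA m = (fine (DA m))%:E by rewrite fineK// ge0_fin_numE// ltey.
have Af : A m.+1 = (fine (A m.+1))%:E by rewrite fineK// ge0_fin_numE ?A_lty ?A_ge0.
move: Gf DAf Af DAle; move: (fine (G m)) (fine (DA m)) (fine (A m.+1)) => g dA a1.
move=> Gf DAf Af DAle.
have g0 : (0 <= g)%R by rewrite -lee_fin -Gf.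
have dA0 : (0 <= dA)%R by rewrite -lee_fin -DAf.
have a10 : (0 <= a1)%R by rewrite -lee_fin -Af A_ge0.
have Z0 : (0 <= Kr m * a1)%R by rewrite mulr_ge0// ltW.
have H := @deduce _ p g dA (Kr m * a1) hp g0 dA0 Z0.
have {}H : ((Kr m * a1) `^ p^-1 <= g `^ p^-1 + dA `^ p^-1)%R.
  apply: H => l l0 l1; have := lam_step m l mn l0 l1.
  by rewrite Gf DAf Af -!EFinM -EFinD lee_fin.
rewrite Af Gf !poweR_EFin -EFinM -(powRM _ (ltW Kr0) a10).
apply: (@le_trans _ _ ((g `^ p^-1)%:E + (dA `^ p^-1)%:E)).
  by rewrite -EFinD lee_fin.
apply: leeD2l; rewrite -poweRM ?A_ge0// -poweR_EFin -DAf.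
apply: gt0_ler_poweR => //; rewrite in_itv /= leey andbT//.
exact: mule_ge0 D0 (A_ge0 m).
Qed.

Definition c k m := (powR (Kr k.-1) (- p^-1))%:E * (ratio_prod w nu S k m) `^ p^-1.

Lemma rp_ge0 k m : (m <= n)%N -> 0 <= ratio_prod w nu S k m.
Proof.
move=> mn; rewrite /ratio_prod big_seq; apply: prode_ge0 => i.
rewrite mem_index_iota => /andP[_ im].
have iN : (i < n)%N by apply: leq_trans im mn.
apply: mule_ge0; first exact: D_ge0.
by rewrite lee_fin invr_ge0 ltW// (Kr_gt0 _ iN).
Qed.

Lemma c_ge0 k m : 0 <= c k m.
Proof. by apply: mule_ge0; [rewrite lee_fin powR_ge0|exact: poweR_ge0]. Qed.

Lemma closed_form m : (m <= n)%N ->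
  A m `^ p^-1 <= \sum_(1 <= k < m.+1) c k m * G k.-1 `^ p^-1.
Proof.
have pi0 : (p^-1 != 0)%R by rewrite invr_neq0// gt_eqF// p0.
elim: m => [_|m IH mn].
  rewrite big_geq// (_ : A 0 = 0) ?poweR0r//.
  by apply: esum1 => v Sv; rewrite hf0// normr0 powR0 ?mul0r// (gt_eqF p0).
have mn' : (m < n)%N by [].
have Kr0 := Kr_gt0 _ mn'.
have D0 := D_ge0 _ mn'.
have kap : (powR (Kr m) (- p^-1) * powR (Kr m) p^-1 = 1)%R.
  by rewrite -powRD ?addNr ?powRr0// (gt_eqF Kr0) implybT.
have kap0 : 0 <= (powR (Kr m) (- p^-1))%:E by rewrite lee_fin powR_ge0.
have Dp0 : 0 <= Dm w nu S m `^ p^-1 by apply: poweR_ge0.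
have S0 : 0 <= \sum_(1 <= k < m.+1) c k m * G k.-1 `^ p^-1.
  by apply: sume_ge0 => k _; apply: mule_ge0; [exact: c_ge0|exact: poweR_ge0].
apply: (@le_trans _ _ ((powR (Kr m) (- p^-1))%:E *
   (G m `^ p^-1 + Dm w nu S m `^ p^-1 *
     \sum_(1 <= k < m.+1) c k m * G k.-1 `^ p^-1))).
  rewrite -[X in X <= _]mul1e.
  rewrite -(_ : ((powR (Kr m) (- p^-1) * powR (Kr m) p^-1)%R)%:E = 1); last by rewrite kap.
  rewrite EFinM -muleA; apply: lee_wpmul2l => //.
  apply: le_trans (R1 m mn') _; apply: leeD2l; apply: lee_wpmul2l => //.
  exact: IH (ltnW mn).
rewrite ge0_muleDr ?poweR_ge0//; last by apply: mule_ge0.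
rewrite ge0_sume_distrr; last first.
  by move=> k _; apply: mule_ge0; [exact: c_ge0|exact: poweR_ge0].
rewrite ge0_sume_distrr; last first.
  by move=> k _; apply: mule_ge0 => //; apply: mule_ge0; [exact: c_ge0|exact: poweR_ge0].
rewrite [X in _ <= X]big_nat_recr//= addeC; apply: leeD; last first.
  by rewrite /c /ratio_prod big_geq// poweR1r mule1.
rewrite le_eqVlt; apply/orP; left; apply/eqP.
apply: eq_big_nat => k /andP[k1 km].
rewrite !muleA; congr (_ * _).
rewrite /c /ratio_prod big_nat_recr -/(ratio_prod w nu S k m)//=.
rewrite poweRM ?rp_ge0 ?(ltnW mn)//; last first.
  by apply: mule_ge0 => //; rewrite lee_fin invr_ge0 ltW.
rewrite poweRM// ?lee_fin ?invr_ge0 ?ltW// poweR_EFin inv_powR//.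
rewrite -muleA; symmetry; exact: perm4.
Qed.

Definition Tsum := \esum_(uv in [set: V * V]) (powR `|f uv.1 - f uv.2| p * w uv.1 uv.2)%:E.

Lemma F1 : \sum_(1 <= k < n.+1) G k.-1 <= Tsum.
Proof.
apply: (@esum_disj_le _ _ _ (index_iota 1 n.+1) (fun k => S k.-1.+1 `*` S k.-1)).
- exact: iota_uniq.
- by [].
- move=> i j z; rewrite !mem_index_iota => /andP[i1 iN] /andP[j1 jN] [Si _] [Sj _].
  rewrite prednK// in Si; rewrite prednK// in Sj.
  exact: (part_uniq _ _ _ iN jN Si Sj).
- by move=> z _; rewrite lee_fin mulr_ge0 ?powR_ge0.
Qed.

Lemma F2 : \esum_(v in ~` S 0%N) (powR `|f v| p * nu v)%:E <= \sum_(1 <= m < n.+1) A m.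
Proof.
rewrite esum_mkcond /A.
under eq_bigr do rewrite esum_mkcond.
rewrite -esum_sum; last first.
  by move=> v m _ _; case: ifPn => // _; rewrite lee_fin mulr_ge0 ?powR_ge0 ?ltW.
apply: le_esum => v _.
case: ifPn => [/[!inE] vS|_]; last first.
  by apply: sume_ge0 => m _; case: ifPn => // _; rewrite lee_fin mulr_ge0 ?powR_ge0 ?ltW.
have [m [mn Smv]] := part_ex v.
have m0 : (0 < m)%N by rewrite lt0n; apply/eqP => m0; apply: vS; rewrite -m0.
have mr : m \in index_iota 1 n.+1 by rewrite mem_index_iota m0 ltnS.
apply: le_trans (@sume_ge_term _ _ _ _ m mr _).
  by rewrite ifT// inE.
by move=> k; case: ifPn => // _; rewrite lee_fin mulr_ge0 ?powR_ge0 ?ltW.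
Qed.

Lemma Tsum_ge0 : 0 <= Tsum.
Proof. by apply: esum_ge0 => z _; rewrite lee_fin mulr_ge0 ?powR_ge0. Qed.

Lemma lhs_ge0 : 0 <= \esum_(v in ~` S 0%N) (powR `|f v| p * nu v)%:E.
Proof. by apply: esum_ge0 => v _; rewrite lee_fin mulr_ge0 ?powR_ge0 ?ltW. Qed.

Lemma sum_closed :
  \sum_(1 <= m < n.+1) A m `^ p^-1 <=
  \sum_(1 <= k < n.+1) \sum_(k <= m < n.+1) c k m * G k.-1 `^ p^-1.
Proof.
rewrite -tri_exchange big_seq [X in _ <= X]big_seq; apply: lee_sum => m.
by rewrite mem_index_iota => /andP[_ mn]; apply: closed_form.
Qed.

Lemma final1 : p = 1%R ->
  lp_norm_on p nu f (~` S 0%N) <= delta w nu S n p * grad_norm p w f.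
Proof.
move=> p1.
have pinv : (p^-1 = 1)%R by rewrite p1 invr1.
have pq : (p == 1%R) = true by rewrite p1 eqxx.
rewrite /lp_norm_on /grad_norm /delta pq pinv poweRe1 ?lhs_ge0//.
rewrite poweRe1; last exact: Tsum_ge0.
apply: le_trans F2 _.
have SC := sum_closed.
rewrite pinv in SC.
have E : \sum_(1 <= m < n.+1) A m `^ 1%R = \sum_(1 <= m < n.+1) A m.
  by apply: eq_bigr => m _; rewrite poweRe1 ?A_ge0.
rewrite E in SC.
apply: le_trans SC _.
set dlt := \big[maxe/0]_(1 <= k < n.+1) _.
have dlt0 : 0 <= dlt by apply: bigmaxe_ge0.
apply: (@le_trans _ _ (\sum_(1 <= k < n.+1) dlt * G k.-1)); last first.
  rewrite -ge0_sume_distrr; last by move=> k _; exact: G_ge0.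
  by apply: lee_wpmul2l => //; exact: F1.
rewrite big_seq [X in _ <= X]big_seq; apply: lee_sum => k.
rewrite mem_index_iota => /andP[k1 kn].
rewrite poweRe1 ?G_ge0//.
rewrite -ge0_sume_distrl; last by move=> m _; exact: c_ge0.
rewrite muleC [X in _ <= X]muleC; apply: lee_wpmul2l; first exact: G_ge0.
have kr : k \in index_iota 1 n.+1 by rewrite mem_index_iota k1 kn.
apply: le_trans (@bigmaxe_ge _ _ _ _ _ k kr).
rewrite le_eqVlt; apply/orP; left; apply/eqP.
rewrite [X in _ = _ * X]big_seq ge0_sume_distrr; last first.
  by move=> m; rewrite mem_index_iota => /andP[_ mn]; apply: rp_ge0.
rewrite [LHS]big_seq; apply: eq_bigr => m.
rewrite mem_index_iota => /andP[km mn].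
rewrite /c pinv poweRe1 ?rp_ge0// powR_inv1//.
have kn' : (k.-1 < n)%N by rewrite /leq prednK//.
exact: ltW (Kr_gt0 _ kn').
Qed.

Lemma finalp : p != 1%R ->
  lp_norm_on p nu f (~` S 0%N) <= delta w nu S n p * grad_norm p w f.
Proof.
move=> pn1.
have p1 : (1 < p)%R by rewrite lt_neqAle eq_sym pn1 hp.
have pi0 : (p^-1 != 0)%R by rewrite invr_neq0// gt_eqF// p0.
have pi0' : (0 <= p^-1)%R by rewrite invr_ge0 ltW// p0.
rewrite /lp_norm_on /grad_norm /delta (negbTE pn1) /=.
have q0 : (0 < p / (p - 1))%R by rewrite divr_gt0 ?subr_gt0// p0.
set X := \sum_(1 <= m < n.+1) _.
have X0 : 0 <= X by apply: sume_ge0 => m _; exact: poweR_ge0.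
have key : \sum_(1 <= m < n.+1) A m <= X * Tsum.
  rewrite /X ge0_sume_distrl; last by move=> m _; exact: poweR_ge0.
  rewrite big_seq [X in _ <= X]big_seq; apply: lee_sum => m.
  rewrite mem_index_iota => /andP[m1 mn].
  have h1 : A m = (A m `^ p^-1) `^ p.
    by rewrite -poweRrM mulVf ?gt_eqF ?p0// poweRe1 ?A_ge0.
  rewrite h1.
  apply: le_trans (_ : (\sum_(1 <= k < m.+1) c k m * G k.-1 `^ p^-1) `^ p <= _).
    apply: gt0_ler_poweR; rewrite ?(ltW p0)// ?in_itv /= ?leey ?andbT ?poweR_ge0//.
      by apply: sume_ge0 => k _; apply: mule_ge0; [exact: c_ge0|exact: poweR_ge0].
    exact: closed_form.
  apply: le_trans (@ehoelder _ _ p (index_iota 1 m.+1) (fun k => c k m)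
    (fun k => G k.-1 `^ p^-1) p1 (fun k => c_ge0 k m) (fun k => poweR_ge0 _ _)) _.
  apply: lee_pmul.
  - exact: poweR_ge0.
  - by apply: sume_ge0 => k _; exact: poweR_ge0.
  - rewrite le_eqVlt; apply/orP; left; apply/eqP; congr (_ `^ _).
    apply: eq_bigr => k _; rewrite /c /Kr.
    rewrite poweRM ?lee_fin ?powR_ge0 ?poweR_ge0// poweR_EFin -powRrM -poweRrM.
    by rewrite mulNr [(p^-1 * _)%R]mulrC.
  - have E : \sum_(1 <= k < m.+1) (G k.-1 `^ p^-1) `^ p = \sum_(1 <= k < m.+1) G k.-1.
      by apply: eq_bigr => k _; rewrite -poweRrM mulVf ?gt_eqF ?p0// poweRe1 ?G_ge0.
    rewrite E; apply: le_trans F1.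
    rewrite [X in _ <= X](big_cat_nat _ (n := m.+1))// ?ltnS//.
    by apply: leeDl; apply: sume_ge0 => k _; exact: G_ge0.
rewrite -poweRM//; last exact: Tsum_ge0.
apply: gt0_ler_poweR => //.
- by rewrite in_itv /= leey andbT lhs_ge0.
- by rewrite in_itv /= leey andbT mule_ge0// Tsum_ge0.
- by apply: le_trans F2 key.
Qed.

End p_part.

End Main.

Local Open Scope ereal_scope.

Theorem corollary1p5 (R : realType) (V : countType)
  (w : V -> V -> R) (nu : V -> R) (S : nat -> set V) (n : nat) :
  (forall u v, (0 <= w u v)%R) ->
  (forall u v, w u v = w v u) ->
  (forall u, w u u = 0%R) ->
  (forall v, (0 < nu v)%R) ->
  (* (S_m)_{m=0..n} is a partition of V *)
  (forall v, exists! m, (m <= n)%N /\ S m v) ->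
  (* K_m(S) is a positive real number for m = 0..n-1 *)
  (forall m, (m < n)%N -> 0 < Km w nu S m < +oo) ->
  (forall (p : R) (f : V -> R), (1 <= p)%R ->
     \esum_(v in [set: V]) (powR `|f v| p * nu v)%:E < +oo ->
     (forall v, S 0%N v -> f v = 0%R) ->
     lp_norm_on p nu f (~` S 0%N) <= delta w nu S n p * grad_norm p w f)
  /\
  (forall f : V -> R, (exists M : R, forall v, (`|f v| <= M)%R) ->
     (forall v, S 0%N v -> f v = 0%R) ->
     linf_norm_on f (~` S 0%N) <= (n%:R)%:E * grad_norm_inf w f).
Proof.
move=> hw0 hsym hdiag hnu hpart hK; split.
- move=> p f hp hfin hf0.
  have [p1|pn1] := eqVneq p 1%R.
  + by apply: final1.
  + by apply: finalp.
- move=> f _ hf0.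
  by apply: inf_part.
Qed.
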